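(* Every locally finite quasivariety of Wajsberg hoops is a primitive variety.
   Context: Wajsberg hoops: basic hoops (0-free subreducts of prelinear divisible $\mathsf{FL}_{ew}$-algebras) satisfying $(x\to y)\to y\approx(y\to x)\to x$. A quasivariety is locally finite if its finitely generated members are finite. For a quasivariety $\mathcal Q$, a subquasivariety $\mathcal Q'$ is equational in $\mathcal Q$ if $\mathcal Q'=\mathbf H(\mathcal Q')\cap\mathcal Q$; $\mathcal Q$ is primitive if every subquasivariety of $\mathcal Q$ is equational in $\mathcal Q$ (equivalently, every subquasivariety of $\mathcal Q$ is structural, where $\mathcal Q$ is structural if for every subquasivariety $\mathcal Q'$, $\mathbf H(\mathcal Q')=\mathbf H(\mathcal Q)$ implies $\mathcal Q'=\mathcal Q$). *)

(* Defs.v *)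
From Stdlib Require Import List.
Import ListNotations.

Record halg := HAlg {
  carrier :> Type;
  hmul : carrier -> carrier -> carrier;
  himp : carrier -> carrier -> carrier;
  hone : carrier }.

Inductive term : Type :=
| Var : nat -> term
| Mul : term -> term -> term
| Imp : term -> term -> term
| One : term.

Fixpoint eval (A : halg) (v : nat -> A) (t : term) : A :=
  match t with
  | Var n => v n
  | Mul s u => hmul A (eval A v s) (eval A v u)
  | Imp s u => himp A (eval A v s) (eval A v u)
  | One => hone A
  end.

Definition equation := (term * term)%type.

Definition holds_in (A : halg) (v : nat -> A) (e : equation) : Prop :=
  eval A v (fst e) = eval A v (snd e).

Definition sat_eq (A : halg) (e : equation) : Prop :=
  forall v : nat -> A, holds_in A v e.

Record quasi_identity := QI { qi_prem : list equation; qi_concl : equation }.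

Definition sat_qi (A : halg) (q : quasi_identity) : Prop :=
  forall v : nat -> A,
    (forall e, In e (qi_prem q) -> holds_in A v e) -> holds_in A v (qi_concl q).

Definition hclass := halg -> Prop.

Definition subclass (K L : hclass) : Prop := forall A, K A -> L A.

Definition is_quasivariety (Q : hclass) : Prop :=
  exists S : quasi_identity -> Prop,
    forall A, Q A <-> (forall q, S q -> sat_qi A q).

Definition is_variety (Q : hclass) : Prop :=
  exists E : equation -> Prop,
    forall A, Q A <-> (forall e, E e -> sat_eq A e).

Definition is_hom (A B : halg) (f : A -> B) : Prop :=
  (forall x y, f (hmul A x y) = hmul B (f x) (f y)) /\
  (forall x y, f (himp A x y) = himp B (f x) (f y)) /\
  f (hone A) = hone B.

Definition Hcl (K : hclass) : hclass :=
  fun B => exists (A : halg) (f : A -> B),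
    K A /\ is_hom A B f /\ (forall b, exists a, f a = b).

Definition equational_in (Q' Q : hclass) : Prop :=
  forall A, Q' A <-> (Hcl Q' A /\ Q A).

Definition primitive (Q : hclass) : Prop :=
  forall Q' : hclass, is_quasivariety Q' -> subclass Q' Q -> equational_in Q' Q.

Definition finite_alg (A : halg) : Prop :=
  exists l : list A, forall a : A, In a l.

(* A is generated by the finite list gens (1 is a constant, so using it as
   default value for out-of-range variables adds nothing). *)
Definition generated_by (A : halg) (gens : list A) : Prop :=
  forall a : A, exists t : term, eval A (fun i => nth i gens (hone A)) t = a.

Definition finitely_generated (A : halg) : Prop :=
  exists gens : list A, generated_by A gens.

Definition locally_finite (Q : hclass) : Prop :=
  forall A, Q A -> finitely_generated A -> finite_alg A.

Definition x := Var 0.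
Definition y := Var 1.
Definition z := Var 2.

Definition hoop_axioms : list equation :=
  [ (Mul x One, x);
    (Mul x y, Mul y x);
    (Mul x (Mul y z), Mul (Mul x y) z);
    (Imp x x, One);
    (Mul x (Imp x y), Mul y (Imp y x));
    (Imp (Mul x y) z, Imp x (Imp y z)) ].

Definition basic_axiom : equation :=
  (Imp (Imp (Imp x y) z) (Imp (Imp (Imp y x) z) z), One).

Definition wajsberg_axiom : equation :=
  (Imp (Imp x y) y, Imp (Imp y x) x).

Definition wajsberg_hoop (A : halg) : Prop :=
  (forall e, In e hoop_axioms -> sat_eq A e) /\
  sat_eq A basic_axiom /\ sat_eq A wajsberg_axiom.

(* Main.v *)
Require Import Defs.
From Stdlib Require Import List Classical ClassicalEpsilon FunctionalExtensionality PropExtensionality ProofIrrelevance Lia.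
Import ListNotations.

Section Hoop.
Variable C : halg.
Hypothesis HW : wajsberg_hoop C.
Let M := hmul C.
Let I := himp C.
Let o := hone C.
Definition vl (a b c : C) : nat -> C := fun n => match n with 0 => a | 1 => b | _ => c end.

Lemma ax_unit a : M a o = a.
Proof. exact (proj1 HW _ (or_introl eq_refl) (vl a a a)). Qed.
Lemma comm a b : M a b = M b a.
Proof. exact (proj1 HW _ (or_intror (or_introl eq_refl)) (vl a b a)). Qed.
Lemma assoc a b c : M a (M b c) = M (M a b) c.
Proof. exact (proj1 HW _ (or_intror (or_intror (or_introl eq_refl))) (vl a b c)). Qed.
Lemma irefl a : I a a = o.
Proof. exact (proj1 HW _ (or_intror (or_intror (or_intror (or_introl eq_refl)))) (vl a a a)). Qed.
Lemma divl a b : M a (I a b) = M b (I b a).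
Proof. exact (proj1 HW _ (or_intror (or_intror (or_intror (or_intror (or_introl eq_refl))))) (vl a b a)). Qed.
Lemma res a b c : I (M a b) c = I a (I b c).
Proof. exact (proj1 HW _ (or_intror (or_intror (or_intror (or_intror (or_intror (or_introl eq_refl)))))) (vl a b c)). Qed.
Lemma basic a b c : I (I (I a b) c) (I (I (I b a) c) c) = o.
Proof. exact (proj1 (proj2 HW) (vl a b c)). Qed.
Lemma waj a b : I (I a b) b = I (I b a) a.
Proof. exact (proj2 (proj2 HW) (vl a b a)). Qed.

Definition le a b := I a b = o.

Lemma antisym a b : le a b -> le b a -> a = b.
Proof. unfold le; intros H1 H2.
  rewrite <- (ax_unit a), <- H1, divl, H2, ax_unit. reflexivity. Qed.

Lemma one_imp a : I o a = a.
Proof. symmetry; apply antisym; unfold le.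
 - rewrite <- res, ax_unit. apply irefl.
 - rewrite <- (ax_unit (I o a)) at 1. rewrite res. apply irefl. Qed.

Lemma imp_one a : I a o = o.
Proof.
  assert (E : M a (I a o) = a). { rewrite divl, one_imp, comm, ax_unit. reflexivity. }
  rewrite <- (irefl (I a o)) at 2. rewrite <- res, comm, E. reflexivity. Qed.

Lemma lrefl a : le a a. Proof. apply irefl. Qed.
Lemma le_one a : le a o. Proof. apply imp_one. Qed.

Lemma mul_le a b : le (M a b) a.
Proof. unfold le. rewrite comm, res, irefl, imp_one. reflexivity. Qed.

Lemma mul_imp_le a b : le (M a (I a b)) b.
Proof. unfold le. rewrite comm, res, irefl. reflexivity. Qed.

Lemma ltrans a b c : le a b -> le b c -> le a c.
Proof. unfold le; intros H1 H2.
  assert (E : a = M b (I b a)). { rewrite <- divl, H1, ax_unit. reflexivity. }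
  rewrite E, comm, res, H2, imp_one. reflexivity. Qed.

Lemma lres a b c : le (M a b) c <-> le a (I b c).
Proof. unfold le. rewrite res. tauto. Qed.

Lemma lres1 a b c : le (M a b) c -> le a (I b c). Proof. apply lres. Qed.
Lemma lres2 a b c : le a (I b c) -> le (M a b) c. Proof. apply lres. Qed.

Lemma mono a b c : le a b -> le (M a c) (M b c).
Proof. intro H. apply lres. eapply ltrans. exact H. apply lres. apply lrefl. Qed.

Lemma mono2 a a' b b' : le a a' -> le b b' -> le (M a b) (M a' b').
Proof. intros H1 H2. eapply ltrans. apply mono, H1.
  rewrite (comm a' b), (comm a' b'). apply mono, H2. Qed.

Lemma imp_mono_r a b c : le b c -> le (I a b) (I a c).
Proof. intro H. apply lres. rewrite comm. eapply ltrans. apply mul_imp_le. exact H. Qed.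

Lemma imp_anti_l a b c : le a b -> le (I b c) (I a c).
Proof. intro H. apply lres. apply ltrans with (b := M (I b c) b).
  rewrite (comm (I b c) a), (comm (I b c) b). apply mono, H. rewrite comm. apply mul_imp_le. Qed.

Lemma rearr a b c d : M (M a b) (M c d) = M (M c a) (M d b).
Proof.
  rewrite <- (assoc a b), (comm b (M c d)), <- (assoc c d b), (assoc a c), (comm a c),
    <- assoc. reflexivity. Qed.

Lemma c_le e c : le c (I e c).
Proof. apply lres. apply mul_le. Qed.

Section Idem.
Variables e z : C.
Hypothesis He : M e e = e.
Hypothesis Hz : forall c, le z c.
Let q := I e z.

Lemma eq_ez : I e q = q.
Proof. unfold q. rewrite <- res, He. reflexivity. Qed.

Lemma qe_le : le (I q e) e.
Proof. unfold le. rewrite waj, eq_ez. apply irefl. Qed.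

Lemma split_e t w : le (M e t) w -> le (M q t) w -> le t w.
Proof. intros H1 H2.
  pose proof (basic e q (I t w)) as B.
  rewrite eq_ez in B. rewrite <- (res q t w) in B. unfold le in H2. rewrite H2, one_imp in B.
  rewrite <- (res (I q e) t w) in B.
  assert (E : I (M (I q e) t) w = o). { eapply ltrans. apply mono, qe_le. exact H1. }
  rewrite E, one_imp in B. exact B. Qed.

Lemma q_idem : M q q = q.
Proof. apply antisym. apply mul_le. apply split_e.
  eapply ltrans. apply mul_imp_le. apply Hz. apply lrefl. Qed.

Lemma q_le c : le q (I e c).
Proof. apply lres. rewrite comm. eapply ltrans. apply mul_imp_le. apply Hz. Qed.

Lemma g_one : I e o = o. Proof. apply imp_one. Qed.

Lemma g_imp c d : I e (I c d) = I (I e c) (I e d).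
Proof. apply antisym.
  - apply lres1, lres1.
    match goal with |- le (M (M ?p ?u) e) _ =>
      replace (M (M p u) e) with (M (M e p) (M e u)) by (rewrite <- rearr, He; reflexivity) end.
    apply ltrans with (b := M (I c d) c). apply mono2. rewrite comm. apply lres2, lrefl. apply mul_imp_le.
    rewrite comm. apply mul_imp_le.
  - rewrite <- (res e c d), (comm e c), (res c e d). apply imp_anti_l, c_le. Qed.

Lemma g_mul c d : I e (M c d) = M (I e c) (I e d).
Proof. apply antisym.
  - apply split_e.
    + eapply ltrans. apply mul_imp_le. apply mono2; apply c_le.
    + eapply ltrans. apply mul_le. rewrite <- q_idem at 1. apply mono2; apply q_le.
  - apply lres1.
    match goal with |- le (M (M ?p ?u) e) _ =>
      replace (M (M p u) e) with (M (M e p) (M e u)) by (rewrite <- rearr, He; reflexivity) end.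
    apply mono2; apply mul_imp_le. Qed.

Lemma g_wd c d : le e (I c d) -> le e (I d c) -> I e c = I e d.
Proof. intros H1 H2. apply antisym.
  - apply lres1. rewrite comm. replace (M e (I e c)) with (M e (M e (I e c))) by (rewrite assoc, He; reflexivity).
    eapply ltrans. apply mono2. apply lrefl. apply mul_imp_le. apply lres2, H1.
  - apply lres1. rewrite comm. replace (M e (I e d)) with (M e (M e (I e d))) by (rewrite assoc, He; reflexivity).
    eapply ltrans. apply mono2. apply lrefl. apply mul_imp_le. apply lres2, H2.
Qed.
End Idem.

Lemma exists_bottom (L : list C) : exists z, forall c, In c L -> le z c.
Proof. induction L as [|a L [z Hz]].
 - exists o. intros c [].
 - exists (M z a). intros c [<-|H]. rewrite comm; apply mul_le.
   eapply ltrans. apply mul_le. auto. Qed.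

Variable B : halg.
Variable h : C -> B.
Hypothesis Hh : is_hom C B h.

Lemma exists_filter_min (L : list C) :
  exists e, h e = hone B /\ forall c, In c L -> h c = hone B -> le e c.
Proof. destruct Hh as (H1 & H2 & H3). induction L as [|a L [e [He Hm]]].
 - exists o. split. exact H3. intros c [].
 - destruct (classic (h a = hone B)) as [Ha|Ha].
   + exists (M e a). split.
     * assert (Eo : M o o = o) by apply ax_unit. unfold M, o in *.
       rewrite H1, He, Ha, <- H3, <- H1, Eo. reflexivity.
     * intros c [<-|Hc] Hc1. rewrite comm; apply mul_le.
       eapply ltrans. apply mul_le. auto.
   + exists e. split. exact He. intros c [<-|Hc] Hc1. contradiction. auto.
Qed.

Lemma key_embed : finite_alg C ->
  exists g : C -> C, is_hom C C g /\ (forall c, h (g c) = h c) /\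
    (forall c d, h c = h d -> g c = g d).
Proof.
  intros [L HL].
  destruct (exists_bottom L) as [z Hz].
  destruct (exists_filter_min L) as [e [He Hm]].
  destruct Hh as (H1 & H2 & H3).
  assert (Hm' : forall c, h c = hone B -> le e c) by (intros; apply Hm; auto).
  assert (Hidem : M e e = e).
  { apply antisym. apply mul_le. apply Hm'.
    assert (Eo : M o o = o) by apply ax_unit. unfold M, o in *.
    rewrite H1, He, <- H3, <- H1, Eo. reflexivity. }
  assert (Hz' : forall c, le z c) by auto.
  exists (fun c => I e c). split; [|split].
  - split; [|split].
    + intros. exact (g_mul e z Hidem Hz' _ _).
    + intros. exact (g_imp e Hidem _ _).
    + apply g_one.
  - intro c. assert (Eo : I o c = c) by apply one_imp. unfold I, o in *.
    rewrite H2, He, <- H3, <- H2, Eo. reflexivity.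
  - intros c d Hcd. assert (Ec : I c c = o) by apply irefl. assert (Ed : I d d = o) by apply irefl.
    unfold I, o in *.
    apply g_wd; auto; apply Hm'.
    + rewrite H2, Hcd, <- H2, Ed. exact H3.
    + rewrite H2, Hcd, <- H2, Ed. exact H3.
Qed.
End Hoop.

Lemma hom_eval (A B : halg) (f : A -> B) : is_hom A B f ->
  forall v t, f (eval A v t) = eval B (fun i => f (v i)) t.
Proof. intros (H1 & H2 & H3) v t. induction t; simpl; try congruence.
  all: try (rewrite H1; congruence); try (rewrite H2; congruence). Qed.

Fixpoint tb (t : term) : nat :=
  match t with Var n => S n | Mul a b => max (tb a) (tb b) | Imp a b => max (tb a) (tb b)
  | One => 0 end.

Lemma eval_ext (A : halg) v v' t : (forall i, i < tb t -> v i = v' i) -> eval A v t = eval A v' t.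
Proof. induction t; simpl; intros H; try reflexivity.
  - apply H; lia.
  - rewrite IHt1, IHt2; auto; intros; apply H; lia.
  - rewrite IHt1, IHt2; auto; intros; apply H; lia. Qed.

Definition eb (e : equation) := max (tb (fst e)) (tb (snd e)).
Definition qb (q : quasi_identity) :=
  fold_right (fun e n => max (eb e) n) (eb (qi_concl q)) (qi_prem q).

Lemma qb_prem q e : In e (qi_prem q) -> eb e <= qb q.
Proof. unfold qb. induction (qi_prem q); simpl; [tauto|]. intros [<-|H]. lia.
  specialize (IHl H). lia. Qed.
Lemma qb_concl q : eb (qi_concl q) <= qb q.
Proof. unfold qb. induction (qi_prem q); simpl; lia. Qed.

Section Gen.
Variable A : halg.
Variable w : nat -> A.
Definition GenC := {a : A | exists t, eval A w t = a}.
Definition gmul (a b : GenC) : GenC.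
  refine (exist _ (hmul A (proj1_sig a) (proj1_sig b)) _).
  destruct a as [a [t Ht]], b as [b [s Hs]]. exists (Mul t s). simpl; congruence. Defined.
Definition gimp (a b : GenC) : GenC.
  refine (exist _ (himp A (proj1_sig a) (proj1_sig b)) _).
  destruct a as [a [t Ht]], b as [b [s Hs]]. exists (Imp t s). simpl; congruence. Defined.
Definition gone : GenC := exist _ (hone A) (ex_intro _ One eq_refl).
Definition Gen : halg := HAlg GenC gmul gimp gone.

Lemma sig_eq (a b : GenC) : proj1_sig a = proj1_sig b -> a = b.
Proof. destruct a, b; simpl; intros ->. f_equal. apply proof_irrelevance. Qed.

Lemma incl_hom : is_hom Gen A (@proj1_sig _ _).
Proof. split; [|split]; reflexivity. Qed.

Lemma gen_eval u t : proj1_sig (eval Gen u t) = eval A (fun i => proj1_sig (u i)) t.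
Proof. apply (hom_eval _ _ _ incl_hom). Qed.
End Gen.

Lemma inj_reflect (C A : halg) (f : C -> A) : is_hom C A f -> (forall a b, f a = f b -> a = b) ->
  forall q, sat_qi A q -> sat_qi C q.
Proof. intros Hf Hi q Hq v Hp. apply Hi. unfold holds_in in *.
  rewrite !(hom_eval _ _ _ Hf). apply Hq. intros e He. unfold holds_in.
  rewrite <- !(hom_eval _ _ _ Hf). f_equal. apply Hp, He. Qed.

Lemma gen_in Q (S : quasi_identity -> Prop) (HS : forall A, Q A <-> (forall q, S q -> sat_qi A q))
  A w : Q A -> Q (Gen A w).
Proof. intro HA. apply HS. intros q Sq. apply (inj_reflect _ _ _ (incl_hom A w)).
  apply sig_eq. apply HS; auto. Qed.

Lemma H_closed Q (S : quasi_identity -> Prop) (HS : forall A, Q A <-> (forall q, S q -> sat_qi A q))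
  (Hw : subclass Q wajsberg_hoop) (Hlf : locally_finite Q)
  (A B : halg) (f : A -> B) : Q A -> is_hom A B f -> (forall b, exists a, f a = b) -> Q B.
Proof.
  intros QA Hf Hs. apply HS. intros q Sq v Hprem.
  set (pk := fun i => proj1_sig (constructive_indefinite_description _ (Hs (v i)))).
  assert (Hpk : forall i, f (pk i) = v i).
  { intro i. unfold pk. destruct constructive_indefinite_description; auto. }
  set (N := qb q).
  set (l := map pk (seq 0 N)).
  set (wA := fun i => nth i l (hone A)).
  assert (HwA : forall i, i < N -> wA i = pk i).
  { intros i Hi. unfold wA, l. rewrite nth_indep with (d' := pk 0).
    rewrite map_nth, seq_nth; auto. rewrite length_map, length_seq; auto. }
  set (Cg := Gen A wA).
  assert (QC : Q Cg) by (apply (gen_in Q S HS); auto).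
  set (gvar := fun i => (exist _ (wA i) (ex_intro _ (Var i) eq_refl) : Cg)).
  set (gens := map gvar (seq 0 N)).
  set (wC := fun i => nth i gens (hone Cg)).
  assert (HwC : forall i, proj1_sig (wC i) = wA i).
  { intro i. unfold wC, gens. destruct (Compare_dec.lt_dec i N) as [Hi|Hi].
    - rewrite nth_indep with (d' := gvar 0). rewrite map_nth, seq_nth; auto.
      rewrite length_map, length_seq; auto.
    - rewrite nth_overflow. unfold wA. rewrite nth_overflow. reflexivity.
      all: try (unfold l); rewrite length_map, length_seq; lia. }
  assert (Hev : forall t, proj1_sig (eval Cg wC t) = eval A wA t).
  { intro t. unfold Cg. rewrite gen_eval. apply eval_ext. intros; apply HwC. }
  assert (FC : finite_alg Cg).
  { apply Hlf; auto. exists gens. intro a. destruct a as [a [t Ht]].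
    exists t. apply sig_eq. fold wC. rewrite Hev. exact Ht. }
  set (h := fun c : Cg => f (proj1_sig c)).
  assert (Hh : is_hom Cg B h).
  { destruct Hf as (H1 & H2 & H3). split; [|split]; intros; unfold h; simpl; auto. }
  destruct (key_embed Cg (Hw _ QC) B h Hh FC) as (g & Hg & Hg1 & Hg2).
  assert (Hb : forall t, tb t <= N -> eval B v t = h (eval Cg wC t)).
  { intros t Ht. rewrite (hom_eval _ _ _ Hh). apply eval_ext. intros i Hi.
    unfold h. rewrite HwC, HwA by lia. symmetry; apply Hpk. }
  assert (HS' := proj1 (HS Cg) QC q Sq (fun i => g (wC i))).
  unfold holds_in in *.
  pose proof (qb_concl q) as Hc. unfold eb in Hc. fold N in Hc.
  rewrite !Hb by lia. rewrite <- (Hg1 (eval Cg wC (fst (qi_concl q)))),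
    <- (Hg1 (eval Cg wC (snd (qi_concl q)))). f_equal.
  rewrite !(hom_eval _ _ _ Hg). apply HS'.
  intros e He. unfold holds_in. rewrite <- !(hom_eval _ _ _ Hg). apply Hg2.
  pose proof (qb_prem q e He) as Hq. unfold eb in Hq. fold N in Hq.
  rewrite <- !Hb by lia. apply Hprem, He.
Qed.

Section Free.
Variable Q : hclass.
Definition equivQ (t s : term) := forall C, Q C -> forall w, eval C w t = eval C w s.
Definition canon (t : term) : term := epsilon (inhabits One) (fun s => equivQ s t).
Lemma canon_spec t : equivQ (canon t) t.
Proof. unfold canon. apply (epsilon_spec (inhabits One) (fun s => equivQ s t)).
  exists t. intros C _ w; reflexivity. Qed.
Lemma canon_eq t s : equivQ t s -> canon t = canon s.
Proof. intro H. unfold canon. f_equal. apply functional_extensionality. intro u.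
  apply propositional_extensionality. unfold equivQ in *. split; intros H' C QC w.
  rewrite H'; auto. rewrite H'; auto. symmetry; auto. Qed.
Definition FC := {t : term | canon t = t}.
Definition mk (t : term) : FC.
  refine (exist _ (canon t) _). apply canon_eq, canon_spec. Defined.
Definition Fr : halg := HAlg FC (fun a b => mk (Mul (proj1_sig a) (proj1_sig b)))
  (fun a b => mk (Imp (proj1_sig a) (proj1_sig b))) (mk One).

Fixpoint subst (s : nat -> term) (t : term) : term :=
  match t with Var n => s n | Mul a b => Mul (subst s a) (subst s b)
  | Imp a b => Imp (subst s a) (subst s b) | One => One end.
Lemma eval_subst C u s t : eval C u (subst s t) = eval C (fun i => eval C u (s i)) t.
Proof. induction t; simpl; congruence. Qed.

Lemma eval_Fr w t : equivQ (proj1_sig (eval Fr w t)) (subst (fun i => proj1_sig (w i)) t).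
Proof. induction t; intros C QC u; simpl.
  - reflexivity.
  - rewrite canon_spec; auto. simpl. rewrite IHt1, IHt2; auto.
  - rewrite canon_spec; auto. simpl. rewrite IHt1, IHt2; auto.
  - rewrite canon_spec; auto. Qed.

Lemma FC_eq (a b : FC) : equivQ (proj1_sig a) (proj1_sig b) -> a = b.
Proof. destruct a as [a Ha], b as [b Hb]; simpl. intro H.
  assert (a = b) by (rewrite <- Ha, <- Hb; apply canon_eq, H). subst. f_equal.
  apply proof_irrelevance. Qed.

Variable S : quasi_identity -> Prop.
Hypothesis HS : forall A, Q A <-> (forall q, S q -> sat_qi A q).

Lemma Fr_in : Q Fr.
Proof. apply HS. intros q Sq w Hp. unfold holds_in. apply FC_eq.
  intros C QC u. rewrite !eval_Fr; auto. rewrite !eval_subst.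
  apply (proj1 (HS C) QC q Sq). intros e He. unfold holds_in.
  rewrite <- !eval_subst. rewrite <- !eval_Fr; auto. rewrite (Hp e He). reflexivity. Qed.
End Free.

Theorem theorem4p4 (Q : hclass) :
  is_quasivariety Q -> subclass Q wajsberg_hoop -> locally_finite Q ->
  is_variety Q /\ primitive Q.
Proof.
  intros [S HS] Hw Hlf. split.
  - exists (fun e => forall C, Q C -> sat_eq C e). intro A. split.
    + intros QA e He. apply He, QA.
    + intros HA. apply HS. intros q Sq v Hp.
      set (Im := Gen A v).
      assert (Hc : forall t, eval A v (canon Q t) = eval A v t).
      { intro t. apply (HA (canon Q t, t)). intros C QC w. apply canon_spec; auto. }
      set (hf := fun a : Fr Q => (exist _ (eval A v (proj1_sig a)) (ex_intro _ _ eq_refl) : Im)).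
      assert (Hh : is_hom (Fr Q) Im hf).
      { split; [|split]; intros; apply sig_eq; simpl; rewrite ?Hc; reflexivity. }
      assert (QIm : Q Im).
      { apply (H_closed Q S HS Hw Hlf (Fr Q) Im hf); auto. apply (Fr_in Q S HS).
        intros [b [t Ht]]. exists (mk Q t). apply sig_eq. simpl. rewrite Hc. exact Ht. }
      set (vi := fun i => (exist _ (v i) (ex_intro _ (Var i) eq_refl) : Im)).
      assert (Hev : forall t, proj1_sig (eval Im vi t) = eval A v t).
      { intro t. unfold Im. rewrite gen_eval. reflexivity. }
      unfold holds_in. rewrite <- !Hev. f_equal.
      apply (proj1 (HS Im) QIm q Sq). intros e He. unfold holds_in. apply sig_eq.
      rewrite !Hev. apply Hp, He.
  - intros Q' [S' HS'] Hsub A. split.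
    + intro QA. split. exists A, (fun a => a). split; [auto|split].
      split; [|split]; reflexivity. intro b; exists b; reflexivity. auto.
    + intros [[A0 [f [QA0 [Hf Hs]]]] _].
      apply (H_closed Q' S' HS'
        (fun C HC => Hw C (Hsub C HC)) (fun C HC => Hlf C (Hsub C HC)) A0 A f); auto.
Qed.
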